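(* Let $\delta\ge1$ be an integer and $v\in V_\delta$. If a coalition structure $C^*$ of $N$ maximizes the social welfare $\mathsf{SW}(\cdot\mid v)$, then $|S|\le\delta$ for every $S\in C^*$.
   Context: Players: a finite set $N$. A characteristic function is $v:2^N\to\mathbb{R}_{\ge 0}$ with $v(\emptyset)=0$. There are fixed constants $0<\mathsf{min}\le\mathsf{max}$ and $v$ is monotone and bounded: $\mathsf{min}\le v(S)\le v(T)\le\mathsf{max}$ for all nonempty $S\subseteq T\subseteq N$. $V_\delta$ is the set of such $v$ with $\delta\cdot\mathsf{min}\le\mathsf{max}<(\delta+1)\cdot\mathsf{min}$. A coalition structure is a partition $C$ of $N$, with social welfare $\mathsf{SW}(C\mid v)=\sum_{S\in C}v(S)$. *)

(* Defs.v *)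
From mathcomp Require Import all_boot all_order all_algebra.
Set Implicit Arguments. Unset Strict Implicit. Unset Printing Implicit Defensive.
Import Order.TTheory GRing.Theory Num.Theory.
Local Open Scope ring_scope.

Definition char_fun (R : realFieldType) (N : finType) (mn mx : R)
    (v : {set N} -> R) : Prop :=
  [/\ v set0 = 0,
      (forall S, 0 <= v S) &
      (forall S T : {set N}, S != set0 -> S \subset T ->
         mn <= v S /\ v S <= v T /\ v T <= mx)].

Definition in_V_delta (R : realFieldType) (N : finType) (mn mx : R) (delta : nat)
    (v : {set N} -> R) : Prop :=
  char_fun mn mx v /\ delta%:R * mn <= mx /\ mx < (delta.+1)%:R * mn.

Definition coalition_structure (N : finType) (C : {set {set N}}) : bool :=
  partition C [set: N].

Definition SW (R : realFieldType) (N : finType) (v : {set N} -> R)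
    (C : {set {set N}}) : R :=
  \sum_(S in C) v S.

(* Main.v *)
Require Import Defs.
From mathcomp Require Import all_boot all_order all_algebra.
Import Order.TTheory GRing.Theory Num.Theory.
Local Open Scope ring_scope.
Set Implicit Arguments. Unset Strict Implicit.

Lemma same_block (N : finType) (P : {set {set N}}) A B x :
  trivIset P -> A \in P -> B \in P -> x \in A -> x \in B -> A = B.
Proof.
move=> /trivIsetP tP AP BP xA xB; apply/eqP; apply/negPn/negP => nAB.
by have := disjointFr (tP _ _ AP BP nAB) xA; rewrite xB.
Qed.

Theorem lemma1 (R : realFieldType) (N : finType) (mn mx : R)
    (hmn : 0 < mn) (hmnmx : mn <= mx) (delta : nat) (hdelta : (1 <= delta)%N)
    (v : {set N} -> R) (hv : in_V_delta mn mx delta v)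
    (Cstar : {set {set N}}) (hC : coalition_structure Cstar)
    (hmax : forall C : {set {set N}}, coalition_structure C -> SW v C <= SW v Cstar) :
  forall S, S \in Cstar -> (#|S| <= delta)%N.
Proof.
move=> S SC; rewrite leqNgt; apply/negP => hS.
case: hv => [[v0 vge0 vmon] [hd1 hd2]].
have /and3P [/eqP covC trivC n0C] := hC.
pose P1 := Cstar :\ S.
pose P2 := [set [set x] | x in S].
pose C := P1 :|: P2.
have S2 : (1 < #|S|)%N by apply: leq_ltn_trans hS.
have dis12 : [disjoint P1 & P2].
  rewrite -setI_eq0; apply/eqP/setP => A; rewrite !inE.
  apply/negbTE/negP => /andP [/andP [AS AC] /imsetP [x xS eA]]; rewrite eA in AC.
  have := same_block trivC AC SC (set11 x) xS => eS.
  by move: S2; rewrite -eS cards1.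
have partC : coalition_structure C.
  apply/and3P; split.
  - apply/eqP/setP => x; rewrite inE; apply/bigcupP.
    have : x \in cover Cstar by rewrite covC inE.
    case/bigcupP => B BC xB.
    have [eBS | nBS] := eqVneq B S.
      exists [set x]; last by rewrite set11.
      by rewrite inE; apply/orP; right; apply/imsetP; exists x => //; rewrite -eBS.
    by exists B => //; rewrite !inE nBS BC.
  - apply/trivIsetP => A B; rewrite !inE.
    case/orP => [/andP [AS AC] | /imsetP [x xS ->]];
    case/orP => [/andP [BS BC] | /imsetP [y yS ->]] => nAB.
    + by move/trivIsetP: trivC; apply.
    + rewrite disjoint_sym disjoints1; apply/negP => yA.
      by move/negP: AS; apply; rewrite (same_block trivC AC SC yA yS).
    + rewrite disjoints1; apply/negP => xB.
      by move/negP: BS; apply; rewrite (same_block trivC BC SC xB xS).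
    + by rewrite disjoints1 inE; apply: contra nAB => /eqP ->.
  - rewrite !inE negb_or; apply/andP; split.
      by apply/nandP; right.
    by apply/imsetP => -[x _ /esym/eqP]; rewrite -cards_eq0 cards1.
have := hmax C partC.
have eC : \sum_(i in C) v i = \sum_(i in P1) v i + \sum_(i in P2) v i.
  rewrite -bigU //; apply: eq_bigl => A; rewrite !inE.
  by [].
rewrite /SW eC (big_setD1 _ SC) big_imset /=; last by move=> x y _ _; apply: set1_inj.
have Sne : S != set0 by rewrite -cards_eq0 -lt0n; apply: ltnW.
have [_ [_ vSmx]] := vmon S S Sne (subxx S).
have hsum : #|S|%:R * mn <= \sum_(i in S) v [set i].
  rewrite -sum1_card natr_sum mulr_suml; apply: ler_sum => i _.
  rewrite mul1r.
  have := vmon [set i] [set i]; rewrite -cards_eq0 cards1 => /(_ isT (subxx _)).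
  by case.
have : (delta.+1)%:R * mn <= #|S|%:R * mn.
  by rewrite ler_pM2r // ler_nat.
move=> h1 h2.
have : mx < \sum_(i in S) v [set i] by apply: (lt_le_trans hd2); apply: (le_trans h1).
move: h2; set a := \sum_(i in P1) v i; set b := \sum_(i in S) v [set i].
move=> h2 h3.
have : v S < b by apply: le_lt_trans vSmx h3.
rewrite -(ltrD2l a) addrC. by move=> /(lt_le_trans) /(_ h2); rewrite ltxx.
Qed.
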